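(* Let $d\ge1$ and let $X\subset S^d$ be a spherical $4$-design that is antipodal ($X=-X$). Let $X'=\{x_1,\dots,x_M\}\subset X$ be any subset with $|X'|=|X|/2$ containing no pair of antipodal vectors. Then the multiset $\widetilde{G_{X'}}=\{G_{x_1},\dots,G_{x_M}\}\cup\{-G_{x_1},\dots,-G_{x_M}\}$ (of $2M$ points, counted with multiplicity) is a spherical $3$-design in the unit sphere $S^{D-1}$ of $\mathrm{Harm}_2(S^d)\cong\mathbb{R}^D$, $D=d(d+3)/2$.
   Context: A finite nonempty multiset $Y$ in a unit sphere $S^{m}\subset\mathbb{R}^{m+1}$ is a spherical $t$-design if $\frac{1}{|Y|}\sum_{y\in Y}f(y)=\int_{S^m}f\,d\sigma$ for every polynomial $f$ on $\mathbb{R}^{m+1}$ of degree at most $t$ (points counted with multiplicity, $\sigma$ normalized surface measure). $\mathrm{Harm}_2(S^d)$ denotes the real vector space (of dimension $D=d(d+3)/2$) of restrictions to $S^d$ of homogeneous harmonic polynomials of degree $2$ on $\mathbb{R}^{d+1}$, with inner product $\langle P,Q\rangle=\int_{S^d}PQ\,d\sigma$, identified with $\mathbb{R}^D$ via an orthonormal basis. For $x\in S^d$ let $K_x\in\mathrm{Harm}_2(S^d)$ be the reproducing element ($\langle K_x,Q\rangle=Q(x)$ for all $Q$) and $G_x=K_x/\|K_x\|$; then $\langle G_x,G_y\rangle=\frac{d+1}{d}(x,y)^2-\frac1d$. *)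

(* Defs.v *)
From Stdlib Require Import Reals List Arith.
Import ListNotations.
Open Scope R_scope.

Definition rsum (l : list R) : R := fold_right Rplus 0 l.
Definition rprod (l : list R) : R := fold_right Rmult 1 l.

Definition point := list R.
Definition dot (x y : point) : R :=
  rsum (map (fun p => fst p * snd p) (combine x y)).
(* S^(n-1) in R^n *)
Definition on_sphere (n : nat) (x : point) : Prop := length x = n /\ dot x x = 1.
Definition vneg (x : point) : point := map Ropp x.

(* Polynomials on R^n: finite linear combinations of monomials x^a,
   a an exponent vector (list of n naturals). *)
Definition expo := list nat.
Definition monomial (a : expo) (x : point) : R :=
  rprod (map (fun p => fst p ^ snd p) (combine x a)).
Definition expo_deg (a : expo) : nat := list_sum a.
Definition poly := list (R * expo).
Definition poly_eval (p : poly) (x : point) : R :=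
  rsum (map (fun t => fst t * monomial (snd t) x) p).
Definition poly_on (n t : nat) (p : poly) : Prop :=
  Forall (fun ca => length (snd ca) = n /\ (expo_deg (snd ca) <= t)%nat) p.

(* oddfact b = (2b-1)!! *)
Fixpoint oddfact (b : nat) : R :=
  match b with 0%nat => 1 | S b' => INR (2 * b' + 1) * oddfact b' end.

(* Integral of the monomial x^a against the normalized surface measure of
   S^(n-1) in R^n: zero unless all a_i are even (a_i = 2 b_i), in which case
   prod_i (2b_i-1)!! / (n (n+2) ... (n + 2(|b|-1))). *)
Definition sphere_moment (n : nat) (a : expo) : R :=
  if forallb Nat.even a then
    rprod (map (fun ai => oddfact (Nat.div2 ai)) a) /
    rprod (map (fun k => INR (n + 2 * k)) (seq 0 (Nat.div2 (expo_deg a))))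
  else 0.

Definition sphere_avg (n : nat) (p : poly) : R :=
  rsum (map (fun t => fst t * sphere_moment n (snd t)) p).

(* Y (a finite nonempty multiset = list) is a spherical t-design in S^(n-1) ⊂ R^n *)
Definition spherical_design (n t : nat) (Y : list point) : Prop :=
  Y <> [] /\ Forall (on_sphere n) Y /\
  forall p : poly, poly_on n t p ->
    rsum (map (poly_eval p) Y) / INR (length Y) = sphere_avg n p.

(* Harm_2 on R^n: homogeneous quadratic harmonic polynomials x |-> x^T A x,
   represented by symmetric traceless matrices A (Laplacian = 2 tr A). *)
Definition mat := nat -> nat -> R.
Definition unit_expo (n i : nat) : expo :=
  map (fun k => if Nat.eqb k i then 1%nat else 0%nat) (seq 0 n).
Definition add_expo (a b : expo) : expo :=
  map (fun p => (fst p + snd p)%nat) (combine a b).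
Definition quad_poly (n : nat) (A : mat) : poly :=
  flat_map (fun i => map (fun j => (A i j, add_expo (unit_expo n i) (unit_expo n j)))
                         (seq 0 n)) (seq 0 n).
Definition poly_mul (p q : poly) : poly :=
  flat_map (fun s => map (fun t => (fst s * fst t, add_expo (snd s) (snd t))) q) p.

Definition is_harm2 (n : nat) (A : mat) : Prop :=
  (forall i j, (i < n)%nat -> (j < n)%nat -> A i j = A j i) /\
  rsum (map (fun i => A i i) (seq 0 n)) = 0.

Definition harm_ip (n : nat) (A B : mat) : R :=
  sphere_avg n (poly_mul (quad_poly n A) (quad_poly n B)).

Definition mscale (c : R) (A : mat) : mat := fun i j => c * A i j.

Definition is_reproducing (n : nat) (x : point) (K : mat) : Prop :=
  is_harm2 n K /\
  forall Q, is_harm2 n Q -> harm_ip n K Q = poly_eval (quad_poly n Q) x.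

Definition G_of (n : nat) (K : mat) : mat := mscale (/ sqrt (harm_ip n K K)) K.

(* E_0..E_{D-1} orthonormal family (hence basis, D = dim) of Harm_2 *)
Definition orthonormal_basis (n D : nat) (E : nat -> mat) : Prop :=
  (forall j, (j < D)%nat -> is_harm2 n (E j)) /\
  (forall i j, (i < D)%nat -> (j < D)%nat ->
     harm_ip n (E i) (E j) = if Nat.eqb i j then 1 else 0).

Definition coords (n D : nat) (E : nat -> mat) (A : mat) : point :=
  map (fun j => harm_ip n A (E j)) (seq 0 D).

(* Main.v *)
Require Import Defs.
From Stdlib Require Import Reals List Arith.
From Stdlib Require Import Permutation Lia Lra FunctionalExtensionality.
Import ListNotations.
Open Scope R_scope.

Lemma rsum_app l1 l2 : rsum (l1 ++ l2) = rsum l1 + rsum l2.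
Proof. induction l1; simpl; [ring| rewrite IHl1; ring]. Qed.

Lemma rsum_map_plus {A} (f g : A -> R) l :
  rsum (map (fun x => f x + g x) l) = rsum (map f l) + rsum (map g l).
Proof. induction l; simpl; [ring| rewrite IHl; ring]. Qed.

Lemma rsum_map_scal {A} c (f : A -> R) l :
  rsum (map (fun x => c * f x) l) = c * rsum (map f l).
Proof. induction l; simpl; [ring| rewrite IHl; ring]. Qed.

Lemma rsum_map_ext {A} (f g : A -> R) l :
  (forall x, In x l -> f x = g x) -> rsum (map f l) = rsum (map g l).
Proof. induction l; simpl; intros H; auto. rewrite H, IHl; auto. Qed.

Lemma rsum_map_swap {A B} (f : A -> B -> R) l1 l2 :
  rsum (map (fun x => rsum (map (fun y => f x y) l2)) l1) =
  rsum (map (fun y => rsum (map (fun x => f x y) l1)) l2).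
Proof.
  induction l1; simpl.
  - induction l2; simpl; auto. rewrite <- IHl2; ring.
  - rewrite IHl1. rewrite <- rsum_map_plus. reflexivity.
Qed.

Lemma rsum_map_const {A} c (l : list A) : rsum (map (fun _ => c) l) = INR (length l) * c.
Proof. induction l; simpl length; [simpl; ring|]. rewrite S_INR. simpl. rewrite IHl. ring. Qed.

Lemma rsum_map_mult {A B} (f : A -> R) (g : B -> R) l l' :
  rsum (map f l) * rsum (map g l') = rsum (map (fun x => rsum (map (fun y => f x * g y) l')) l).
Proof.
  induction l; simpl; [ring|]. rewrite <- IHl. rewrite rsum_map_scal. ring.
Qed.

Lemma rsum_map_nonneg {A} (f : A -> R) l : (forall x, In x l -> 0 <= f x) -> 0 <= rsum (map f l).
Proof. induction l; simpl; intros H; [lra|]. pose proof (H a (or_introl eq_refl)). pose proof (IHl (fun x h => H x (or_intror h))). lra. Qed.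

Lemma rsum_map_zero_each {A} (f : A -> R) l : (forall x, In x l -> 0 <= f x) ->
  rsum (map f l) = 0 -> forall x, In x l -> f x = 0.
Proof.
  induction l; simpl; intros H H0 x Hx; [contradiction|].
  pose proof (H a (or_introl eq_refl)).
  pose proof (rsum_map_nonneg f l (fun x h => H x (or_intror h))).
  destruct Hx as [<-|Hx]; [lra|]. apply IHl; auto; lra.
Qed.

Lemma rsum_perm l l' : Permutation l l' -> rsum l = rsum l'.
Proof. induction 1; simpl; auto; try ring; congruence. Qed.

Lemma rsum_map_map {A B} (f : B -> R) (g : A -> B) l : rsum (map f (map g l)) = rsum (map (fun x => f (g x)) l).
Proof. rewrite map_map; reflexivity. Qed.

Lemma rsum_map_flat {A B} (f : B -> R) (g : A -> list B) l :
  rsum (map f (flat_map g l)) = rsum (map (fun a => rsum (map f (g a))) l).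
Proof. induction l; simpl; auto. rewrite map_app, rsum_app, IHl. reflexivity. Qed.

Definition sumn (n : nat) (f : nat -> R) : R := rsum (map f (seq 0 n)).

Lemma sumn_ext n f g : (forall k, (k < n)%nat -> f k = g k) -> sumn n f = sumn n g.
Proof. intros H; apply rsum_map_ext. intros x Hx; apply in_seq in Hx; apply H; lia. Qed.

Lemma sumn_S n f : sumn (S n) f = sumn n f + f n.
Proof. unfold sumn. rewrite seq_S, map_app, rsum_app. simpl. ring. Qed.

Lemma sumn_point n a f : (a < n)%nat -> (forall k, (k < n)%nat -> k <> a -> f k = 0) -> sumn n f = f a.
Proof.
  induction n; intros Ha H; [lia|]. rewrite sumn_S.
  destruct (Nat.eq_dec a n) as [->|ne].
  - replace (sumn n f) with (sumn n (fun _ => 0)).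
    + unfold sumn; rewrite rsum_map_const; ring.
    + apply sumn_ext; intros k Hk; symmetry; apply H; lia.
  - rewrite IHn by (auto; lia). rewrite (H n); [ring|lia|auto].
Qed.

Definition dl (i j : nat) : R := if Nat.eqb i j then 1 else 0.

Lemma sumn_delta_l n a f : (a < n)%nat -> sumn n (fun k => dl a k * f k) = f a.
Proof.
  intros Ha. rewrite (sumn_point n a); auto.
  - unfold dl; rewrite Nat.eqb_refl; ring.
  - intros k Hk ne; unfold dl. destruct (Nat.eqb_spec a k); [congruence| ring].
Qed.

Lemma sumn_plus n f g : sumn n (fun k => f k + g k) = sumn n f + sumn n g.
Proof. apply rsum_map_plus. Qed.
Lemma sumn_scal n c f : sumn n (fun k => c * f k) = c * sumn n f.
Proof. apply rsum_map_scal. Qed.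
Lemma sumn_const n c : sumn n (fun _ => c) = INR n * c.
Proof. unfold sumn; rewrite rsum_map_const, length_seq; auto. Qed.
Lemma sumn_swap n m (f : nat -> nat -> R) :
  sumn n (fun i => sumn m (fun j => f i j)) = sumn m (fun j => sumn n (fun i => f i j)).
Proof. apply rsum_map_swap. Qed.

Lemma rprod_app l1 l2 : rprod (l1 ++ l2) = rprod l1 * rprod l2.
Proof. induction l1; simpl; [ring| rewrite IHl1; ring]. Qed.

Definition prodn (n : nat) (f : nat -> R) : R := rprod (map f (seq 0 n)).
Lemma prodn_ext n f g : (forall k, (k < n)%nat -> f k = g k) -> prodn n f = prodn n g.
Proof. intros H. unfold prodn. assert (forall l, (forall x, In x l -> f x = g x) -> rprod (map f l) = rprod (map g l)).
 { induction l; simpl; intros H'; auto. rewrite H', IHl; auto. }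
 apply H0. intros x Hx; apply in_seq in Hx; apply H; lia. Qed.
Lemma prodn_S n f : prodn (S n) f = prodn n f * f n.
Proof. unfold prodn. rewrite seq_S, map_app, rprod_app. simpl. ring. Qed.
Lemma prodn_one n : prodn n (fun _ => 1) = 1.
Proof. induction n; [reflexivity|]. rewrite prodn_S, IHn; ring. Qed.
Lemma prodn_point n a f : (a < n)%nat -> (forall k, (k < n)%nat -> k <> a -> f k = 1) -> prodn n f = f a.
Proof.
  induction n; intros Ha H; [lia|]. rewrite prodn_S.
  destruct (Nat.eq_dec a n) as [->|ne].
  - replace (prodn n f) with (prodn n (fun _ => 1)).
    + rewrite prodn_one; ring.
    + apply prodn_ext; intros k Hk; symmetry; apply H; lia.
  - rewrite IHn by (auto; lia). rewrite (H n); [ring|lia|auto].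
Qed.
Lemma prodn_mult n f g : prodn n (fun k => f k * g k) = prodn n f * prodn n g.
Proof. induction n; [unfold prodn; simpl; ring|]. rewrite !prodn_S, IHn; ring. Qed.

Lemma map_nth_seq {B} (f : R -> B) (x : list R) :
  map f x = map (fun j => f (nth j x 0)) (seq 0 (length x)).
Proof.
  induction x; simpl; auto. f_equal. rewrite IHx, <- seq_shift, map_map. reflexivity.
Qed.

Lemma rsum_nth (f : R -> R) x : rsum (map f x) = sumn (length x) (fun j => f (nth j x 0)).
Proof. unfold sumn. rewrite map_nth_seq. reflexivity. Qed.

Lemma combine_map {A B C} (f : A -> B) (g : A -> C) l :
  combine (map f l) (map g l) = map (fun k => (f k, g k)) l.
Proof. induction l; simpl; auto. rewrite IHl; auto. Qed.

Lemma add_expo_map f g n :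
  add_expo (map f (seq 0 n)) (map g (seq 0 n)) = map (fun k => (f k + g k)%nat) (seq 0 n).
Proof. unfold add_expo. rewrite combine_map, map_map. reflexivity. Qed.

Lemma monomial_map_gen (x : list R) : forall f,
  map (fun p => fst p ^ snd p) (combine x (map f (seq 0 (length x)))) =
  map (fun k => nth k x 0 ^ f k) (seq 0 (length x)).
Proof.
  induction x; intros f; simpl; auto. f_equal.
  rewrite <- seq_shift, !map_map. rewrite (IHx (fun k => f (S k))). reflexivity.
Qed.

Lemma monomial_map n f x : length x = n ->
  monomial (map f (seq 0 n)) x = prodn n (fun k => nth k x 0 ^ f k).
Proof. intros <-. unfold monomial, prodn. rewrite monomial_map_gen. reflexivity. Qed.

Definition indc (i k : nat) : nat := if Nat.eqb k i then 1%nat else 0%nat.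

Lemma unit_expo_ind n i : unit_expo n i = map (indc i) (seq 0 n).
Proof. reflexivity. Qed.

Lemma prodn_ind n i x : (i < n)%nat -> prodn n (fun k => nth k x 0 ^ indc i k) = nth i x 0.
Proof.
  intros Hi. rewrite (prodn_point n i); auto.
  - unfold indc; rewrite Nat.eqb_refl; simpl; ring.
  - intros k Hk ne; unfold indc. destruct (Nat.eqb_spec k i); [congruence|reflexivity].
Qed.

Lemma rsum_quad (F : R * expo -> R) n A :
  rsum (map F (quad_poly n A)) =
  sumn n (fun i => sumn n (fun j => F (A i j, add_expo (unit_expo n i) (unit_expo n j)))).
Proof. unfold quad_poly. rewrite rsum_map_flat. unfold sumn. apply rsum_map_ext; intros. rewrite map_map. reflexivity. Qed.

Lemma rsum_pmul (F : R * expo -> R) p q :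
  rsum (map F (poly_mul p q)) =
  rsum (map (fun s => rsum (map (fun t => F (fst s * fst t, add_expo (snd s) (snd t))) q)) p).
Proof. unfold poly_mul. rewrite rsum_map_flat. apply rsum_map_ext; intros. rewrite map_map. reflexivity. Qed.

Definition xi (x : point) (i : nat) : R := nth i x 0.
Definition qf (n : nat) (A : mat) (x : point) : R :=
  sumn n (fun i => sumn n (fun j => A i j * (xi x i * xi x j))).

Lemma mono2 n i j x : (i < n)%nat -> (j < n)%nat -> length x = n ->
  monomial (add_expo (unit_expo n i) (unit_expo n j)) x = xi x i * xi x j.
Proof.
  intros Hi Hj Hx. rewrite !unit_expo_ind, add_expo_map, monomial_map by auto.
  erewrite prodn_ext. 2:{ intros k Hk. rewrite pow_add. reflexivity. }
  rewrite prodn_mult, !prodn_ind; auto.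
Qed.

Lemma poly_eval_quad n A x : length x = n -> poly_eval (quad_poly n A) x = qf n A x.
Proof.
  intros Hx. unfold poly_eval. rewrite rsum_quad. unfold qf. apply sumn_ext; intros i Hi.
  apply sumn_ext; intros j Hj. simpl. rewrite mono2; auto.
Qed.

Lemma mono4 n i j k l x : (i < n)%nat -> (j < n)%nat -> (k < n)%nat -> (l < n)%nat -> length x = n ->
  monomial (add_expo (add_expo (unit_expo n i) (unit_expo n j)) (add_expo (unit_expo n k) (unit_expo n l))) x
  = (xi x i * xi x j) * (xi x k * xi x l).
Proof.
  intros Hi Hj Hk Hl Hx. rewrite !unit_expo_ind, !add_expo_map, monomial_map by auto.
  rewrite (prodn_ext n _ (fun m => ((xi x m ^ indc i m * xi x m ^ indc j m) * (xi x m ^ indc k m * xi x m ^ indc l m)))).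
  2:{ intros m Hm. rewrite !pow_add. reflexivity. }
  rewrite !prodn_mult. unfold xi. rewrite !prodn_ind; auto.
Qed.

Lemma rsum_quadquad (F : R * expo -> R) n A B :
  rsum (map F (poly_mul (quad_poly n A) (quad_poly n B))) =
  sumn n (fun i => sumn n (fun j => sumn n (fun k => sumn n (fun l =>
   F (A i j * B k l, add_expo (add_expo (unit_expo n i) (unit_expo n j)) (add_expo (unit_expo n k) (unit_expo n l))))))).
Proof.
  rewrite rsum_pmul, rsum_quad. apply sumn_ext; intros i Hi. apply sumn_ext; intros j Hj.
  rewrite rsum_quad. reflexivity.
Qed.

Lemma sumn_mult n m f g : sumn n f * sumn m g = sumn n (fun i => sumn m (fun j => f i * g j)).
Proof. apply rsum_map_mult. Qed.

Lemma sumn_mult_r n f c : sumn n f * c = sumn n (fun i => f i * c).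
Proof. rewrite Rmult_comm, <- sumn_scal. apply sumn_ext; intros; ring. Qed.

Lemma poly_eval_qq n A B x : length x = n ->
  poly_eval (poly_mul (quad_poly n A) (quad_poly n B)) x = qf n A x * qf n B x.
Proof.
  intros Hx. unfold poly_eval. rewrite rsum_quadquad. unfold qf. rewrite sumn_mult_r.
  apply sumn_ext; intros i Hi. rewrite sumn_mult_r. apply sumn_ext; intros j Hj.
  rewrite <- sumn_scal. apply sumn_ext; intros k Hk. rewrite <- sumn_scal. apply sumn_ext; intros l Hl.
  simpl. rewrite mono4; auto. ring.
Qed.

Lemma dot_self x : dot x x = sumn (length x) (fun k => xi x k * xi x k).
Proof.
  unfold dot. replace (combine x x) with (map (fun a => (a, a)) x).
  - rewrite map_map, rsum_nth. reflexivity.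
  - induction x; simpl; auto. rewrite IHx; auto.
Qed.

Lemma list_sum_map_plus (f g : nat -> nat) l :
  list_sum (map (fun t => f t + g t)%nat l) = (list_sum (map f l) + list_sum (map g l))%nat.
Proof. induction l; simpl; auto. rewrite IHl; lia. Qed.

Lemma list_sum_ind_big n i : (n <= i)%nat -> list_sum (map (indc i) (seq 0 n)) = 0%nat.
Proof.
  induction n; intros H; auto. rewrite seq_S, map_app, list_sum_app, IHn by lia. simpl.
  unfold indc. destruct (Nat.eqb_spec n i); [lia|reflexivity].
Qed.

Lemma list_sum_ind n i : (i < n)%nat -> list_sum (map (indc i) (seq 0 n)) = 1%nat.
Proof.
  induction n; intros H; [lia|]. rewrite seq_S, map_app, list_sum_app. simpl.
  destruct (Nat.eq_dec i n) as [->|ne].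
  - rewrite list_sum_ind_big by lia. unfold indc; rewrite Nat.eqb_refl; reflexivity.
  - rewrite IHn by lia. unfold indc. destruct (Nat.eqb_spec n i); [lia|reflexivity].
Qed.

Lemma forallb_odd (f : nat -> nat) n t : (t < n)%nat -> Nat.even (f t) = false ->
  forallb Nat.even (map f (seq 0 n)) = false.
Proof.
  intros Ht Ho. destruct (forallb Nat.even (map f (seq 0 n))) eqn:E; auto.
  rewrite forallb_forall in E. rewrite E in Ho; [discriminate|]. apply in_map, in_seq; lia.
Qed.

Lemma forallb_all (f : nat -> nat) n : (forall t, (t < n)%nat -> Nat.even (f t) = true) ->
  forallb Nat.even (map f (seq 0 n)) = true.
Proof.
  intros H. apply forallb_forall. intros x Hx. apply in_map_iff in Hx. destruct Hx as [t [<- Ht]].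
  apply in_seq in Ht. apply H; lia.
Qed.

Lemma den4 n : rprod (map (fun k => INR (n + 2 * k)) (seq 0 2)) = INR n * INR (n+2).
Proof. simpl. rewrite Nat.add_0_r. ring. Qed.

Ltac simpl_eqb := repeat match goal with |- context [Nat.eqb ?a ?b] =>
   destruct (Nat.eqb_spec a b); try (exfalso; congruence) end.

Lemma m4_val n i j k l : (i < n)%nat -> (j < n)%nat -> (k < n)%nat -> (l < n)%nat ->
  sphere_moment n (add_expo (add_expo (unit_expo n i) (unit_expo n j)) (add_expo (unit_expo n k) (unit_expo n l)))
  = (dl i j * dl k l + dl i k * dl j l + dl i l * dl j k) / (INR n * INR (n+2)).
Proof.
  intros Hi Hj Hk Hl. rewrite !unit_expo_ind, !add_expo_map.
  unfold sphere_moment, expo_deg.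
  rewrite !list_sum_map_plus, !list_sum_ind by auto. simpl (Nat.div2 _). rewrite den4.
  assert (INR n <> 0) by (apply not_0_INR; lia).
  assert (INR (n+2) <> 0) by (apply not_0_INR; lia).
  rewrite map_map. fold (prodn n (fun t => oddfact (Nat.div2 (indc i t + indc j t + (indc k t + indc l t))))).
  destruct (Nat.eq_dec i j); destruct (Nat.eq_dec i k); destruct (Nat.eq_dec i l);
  destruct (Nat.eq_dec j k); destruct (Nat.eq_dec j l); destruct (Nat.eq_dec k l);
  subst; try (exfalso; congruence);
  first
  [ match goal with |- context [forallb _ (map ?F _)] =>
    first [ rewrite (forallb_odd F n i) by (auto; unfold indc; simpl_eqb; reflexivity)
          | rewrite (forallb_odd F n j) by (auto; unfold indc; simpl_eqb; reflexivity)
          | rewrite (forallb_odd F n k) by (auto; unfold indc; simpl_eqb; reflexivity)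
          | rewrite (forallb_odd F n l) by (auto; unfold indc; simpl_eqb; reflexivity) ] end;
    unfold dl; simpl_eqb; field; auto
  | rewrite forallb_all by (intros t Ht; unfold indc; simpl_eqb; reflexivity);
    first [ rewrite (prodn_point n i) by (auto; intros t Ht Hne; unfold indc; simpl_eqb; simpl; ring)
          | rewrite (prodn_point n j) by (auto; intros t Ht Hne; unfold indc; simpl_eqb; simpl; ring)
          | rewrite (prodn_point n k) by (auto; intros t Ht Hne; unfold indc; simpl_eqb; simpl; ring)
          | rewrite (prodn_point n l) by (auto; intros t Ht Hne; unfold indc; simpl_eqb; simpl; ring) ];
    unfold indc, dl; simpl_eqb; simpl; field; auto ].
Qed.

Definition tr n (A : mat) := sumn n (fun i => A i i).

Lemma harm_ip_sum n A B : (0 < n)%nat ->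
  harm_ip n A B = sumn n (fun i => sumn n (fun j => sumn n (fun k => sumn n (fun l =>
    A i j * B k l * ((dl i j * dl k l + dl i k * dl j l + dl i l * dl j k) / (INR n * INR (n+2))))))).
Proof.
  intros Hn. unfold harm_ip, sphere_avg. rewrite rsum_quadquad.
  apply sumn_ext; intros i Hi. apply sumn_ext; intros j Hj.
  apply sumn_ext; intros k Hk. apply sumn_ext; intros l Hl. simpl. rewrite m4_val; auto.
Qed.

Lemma harm_ip_formula n A B : (0 < n)%nat ->
  harm_ip n A B = (tr n A * tr n B + sumn n (fun i => sumn n (fun j => A i j * B i j))
     + sumn n (fun i => sumn n (fun j => A i j * B j i))) / (INR n * INR (n+2)).
Proof.
  intros Hn. rewrite harm_ip_sum by auto. set (den := INR n * INR (n+2)).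
  transitivity (sumn n (fun i => sumn n (fun j => A i j / den * (dl i j * tr n B + B i j + B j i)))).
  { apply sumn_ext; intros i Hi. apply sumn_ext; intros j Hj.
    transitivity (sumn n (fun k => (A i j / den * dl i j) * (dl k k * B k k) + (A i j / den) * (dl i k * B k j) + (A i j / den) * (dl j k * B k i))).
    { apply sumn_ext; intros k Hk.
      transitivity (sumn n (fun l => (A i j / den * dl i j) * (dl k l * B k l) + (A i j / den * dl i k) * (dl j l * B k l) + (A i j / den * dl j k) * (dl i l * B k l))).
      { apply sumn_ext; intros l Hl. unfold Rdiv. ring. }
      rewrite !sumn_plus, !sumn_scal, !sumn_delta_l by auto. assert (Hkk : dl k k = 1) by (unfold dl; rewrite Nat.eqb_refl; auto). rewrite Hkk.
      ring. }
    rewrite !sumn_plus, !sumn_scal, !sumn_delta_l by auto.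
    unfold tr. replace (sumn n (fun k => dl k k * B k k)) with (sumn n (fun k => B k k)).
    2:{ apply sumn_ext; intros k Hk; unfold dl; rewrite Nat.eqb_refl; ring. } ring. }
  transitivity (sumn n (fun i => (tr n B / den) * (A i i) + / den * sumn n (fun j => A i j * B i j) + / den * sumn n (fun j => A i j * B j i))).
  { apply sumn_ext; intros i Hi.
    transitivity (sumn n (fun j => (tr n B / den) * (dl i j * A i j) + / den * (A i j * B i j) + / den * (A i j * B j i))).
    { apply sumn_ext; intros j Hj. unfold Rdiv. ring. }
    rewrite !sumn_plus, !sumn_scal, !sumn_delta_l by auto. reflexivity. }
  rewrite !sumn_plus, !sumn_scal. unfold tr. unfold Rdiv. ring.
Qed.

Lemma sumn_sym n (A B : mat) : (forall i j, (i < n)%nat -> (j < n)%nat -> B i j = B j i) ->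
  sumn n (fun i => sumn n (fun j => A i j * B j i)) = sumn n (fun i => sumn n (fun j => A i j * B i j)).
Proof. intros H. apply sumn_ext; intros i Hi; apply sumn_ext; intros j Hj. rewrite H; auto. Qed.

Definition cc n := INR n * INR (n+2) / 2.
Definition Cand n x : mat := fun i j => cc n * (xi x i * xi x j - dl i j / INR n).

Lemma sum_sq n x : on_sphere n x -> sumn n (fun i => xi x i * xi x i) = 1.
Proof. intros [Hl Hd]. rewrite dot_self, Hl in Hd. exact Hd. Qed.

Lemma sumn_dl_l n i f : (i < n)%nat -> sumn n (fun j => dl i j * f j) = f i.
Proof. apply sumn_delta_l. Qed.

Lemma Cand_harm2 n x : (0 < n)%nat -> on_sphere n x -> is_harm2 n (Cand n x).
Proof.
  intros Hn Hx. assert (INR n <> 0) by (apply not_0_INR; lia). split.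
  - intros i j _ _. unfold Cand, dl. rewrite Nat.eqb_sym. ring.
  - fold (sumn n (fun i => Cand n x i i)). unfold Cand.
    transitivity (cc n * (sumn n (fun i => xi x i * xi x i) + (- / INR n) * sumn n (fun i => 1))).
    { rewrite <- sumn_scal, <- sumn_plus, <- sumn_scal. apply sumn_ext; intros i Hi.
      unfold dl; rewrite Nat.eqb_refl. field; auto. }
    rewrite sum_sq by auto. rewrite sumn_const. field. auto.
Qed.

Lemma Cand_repr n x Q : (0 < n)%nat -> on_sphere n x -> is_harm2 n Q ->
  harm_ip n (Cand n x) Q = qf n Q x.
Proof.
  intros Hn Hx [HQs HQt]. assert (INR n <> 0) by (apply not_0_INR; lia).
  assert (INR (n+2) <> 0) by (apply not_0_INR; lia).
  fold (sumn n (fun i => Q i i)) in HQt. fold (tr n Q) in HQt.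
  rewrite harm_ip_formula, HQt by auto. rewrite (sumn_sym n (Cand n x) Q) by auto.
  transitivity (2 / (INR n * INR (n+2)) * sumn n (fun i => sumn n (fun j => Cand n x i j * Q i j))).
  { unfold Rdiv; ring. }
  transitivity (2 / (INR n * INR (n+2)) * (cc n * (qf n Q x + (- / INR n) * sumn n (fun i => sumn n (fun j => dl i j * Q i j))))).
  { f_equal. unfold qf. rewrite <- sumn_scal, <- sumn_plus, <- sumn_scal. apply sumn_ext; intros i Hi.
    rewrite <- sumn_scal, <- sumn_plus, <- sumn_scal. apply sumn_ext; intros j Hj. unfold Cand. unfold Rdiv. ring. }
  replace (sumn n (fun i => sumn n (fun j => dl i j * Q i j))) with (tr n Q).
  2:{ apply sumn_ext; intros i Hi. rewrite sumn_dl_l; auto. }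
  rewrite HQt. unfold cc. field. auto.
Qed.

Lemma Cand_val n x : (0 < n)%nat -> on_sphere n x -> qf n (Cand n x) x = (INR n + 2) * (INR n - 1) / 2.
Proof.
  intros Hn Hx. assert (INR n <> 0) by (apply not_0_INR; lia).
  unfold qf.
  transitivity (cc n * (sumn n (fun i => xi x i * xi x i) * sumn n (fun j => xi x j * xi x j)
     + (- / INR n) * sumn n (fun i => sumn n (fun j => dl i j * (xi x i * xi x j))))).
  { rewrite sumn_mult, <- sumn_scal, <- sumn_plus, <- sumn_scal. apply sumn_ext; intros i Hi.
    rewrite <- sumn_scal, <- sumn_plus, <- sumn_scal. apply sumn_ext; intros j Hj. unfold Cand. unfold Rdiv. ring. }
  replace (sumn n (fun i => sumn n (fun j => dl i j * (xi x i * xi x j)))) with (sumn n (fun i => xi x i * xi x i)).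
  2:{ apply sumn_ext; intros i Hi. rewrite sumn_dl_l; auto. }
  rewrite sum_sq by auto. unfold cc. rewrite plus_INR. simpl (INR 2). field. auto.
Qed.

Lemma expo4_props n i j k l : (i < n)%nat -> (j < n)%nat -> (k < n)%nat -> (l < n)%nat ->
  length (add_expo (add_expo (unit_expo n i) (unit_expo n j)) (add_expo (unit_expo n k) (unit_expo n l))) = n /\
  expo_deg (add_expo (add_expo (unit_expo n i) (unit_expo n j)) (add_expo (unit_expo n k) (unit_expo n l))) = 4%nat.
Proof.
  intros. rewrite !unit_expo_ind, !add_expo_map. split.
  - rewrite length_map, length_seq; auto.
  - unfold expo_deg. rewrite !list_sum_map_plus, !list_sum_ind; auto.
Qed.

Lemma poly_on_qq n A B : poly_on n 4 (poly_mul (quad_poly n A) (quad_poly n B)).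
Proof.
  unfold poly_on. apply Forall_forall. intros t Ht.
  unfold poly_mul in Ht. apply in_flat_map in Ht. destruct Ht as [s [Hs Ht]].
  apply in_map_iff in Ht. destruct Ht as [u [<- Hu]].
  unfold quad_poly in Hs, Hu. apply in_flat_map in Hs, Hu.
  destruct Hs as [i [Hi Hs]]. destruct Hu as [k [Hk Hu]].
  apply in_map_iff in Hs, Hu. destruct Hs as [j [<- Hj]]. destruct Hu as [l [<- Hl]].
  apply in_seq in Hi, Hj, Hk, Hl. simpl.
  destruct (expo4_props n i j k l) as [H1 H2]; try lia.
Qed.

Lemma design_len n t X : spherical_design n t X -> (0 < INR (length X)).
Proof. intros [H _]. destruct X; [congruence|]. simpl length. apply lt_0_INR. lia. Qed.

Lemma design_in n t X x : spherical_design n t X -> In x X -> on_sphere n x.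
Proof. intros [_ [H _]] Hx. rewrite Forall_forall in H. auto. Qed.

Lemma harm_ip_avg n X A B : spherical_design n 4 X ->
  harm_ip n A B = rsum (map (fun x => qf n A x * qf n B x) X) / INR (length X).
Proof.
  intros HX. pose proof HX as [_ [HF Hd]]. unfold harm_ip. rewrite <- Hd by apply poly_on_qq.
  f_equal. apply rsum_map_ext. intros x Hx. rewrite Forall_forall in HF. destruct (HF x Hx) as [Hl _].
  apply poly_eval_qq; auto.
Qed.

Lemma harm_ip_sumX n X A B : spherical_design n 4 X ->
  rsum (map (fun x => qf n A x * qf n B x) X) = INR (length X) * harm_ip n A B.
Proof. intros HX. rewrite (harm_ip_avg n X A B HX). pose proof (design_len _ _ _ HX). field. lra. Qed.

Lemma rsum_sumn {A} D (f : nat -> A -> R) l :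
  rsum (map (fun x => sumn D (fun j => f j x)) l) = sumn D (fun j => rsum (map (f j) l)).
Proof. unfold sumn. apply rsum_map_swap. Qed.

Lemma bessel n X D E Ky y : spherical_design n 4 X -> orthonormal_basis n D E ->
  (forall Q, is_harm2 n Q -> harm_ip n Ky Q = qf n Q y) ->
  sumn D (fun j => qf n (E j) y * qf n (E j) y) <= harm_ip n Ky Ky.
Proof.
  intros HX [HE1 HE2] HK. pose proof (design_len _ _ _ HX) as HL. set (L := INR (length X)) in *.
  set (c := fun j => qf n (E j) y).
  set (F := qf n Ky).
  set (e := fun j => qf n (E j)).
  assert (hFF : rsum (map (fun x => F x * F x) X) = L * harm_ip n Ky Ky) by (apply harm_ip_sumX; auto).
  assert (hFe : forall j, (j < D)%nat -> rsum (map (fun x => F x * e j x) X) = L * c j).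
  { intros j Hj. unfold F, e. rewrite harm_ip_sumX by auto. rewrite HK; auto. }
  assert (hee : forall i j, (i < D)%nat -> (j < D)%nat -> rsum (map (fun x => e i x * e j x) X) = L * dl i j).
  { intros i j Hi Hj. unfold e. rewrite harm_ip_sumX, HE2 by auto. reflexivity. }
  assert (H0 : 0 <= rsum (map (fun x => (F x - sumn D (fun j => c j * e j x)) * (F x - sumn D (fun j => c j * e j x))) X)).
  { apply rsum_map_nonneg. intros; apply Rle_0_sqr. }
  rewrite (rsum_map_ext _ (fun x => F x * F x + (-2) * sumn D (fun j => c j * (F x * e j x))
      + sumn D (fun i => c i * sumn D (fun j => c j * (e i x * e j x))))) in H0.
  2:{ intros x _.
      replace (sumn D (fun i => c i * sumn D (fun j => c j * (e i x * e j x)))) with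
        (sumn D (fun i => c i * e i x) * sumn D (fun j => c j * e j x)).
      2:{ rewrite sumn_mult. apply sumn_ext; intros i Hi. rewrite <- sumn_scal. apply sumn_ext; intros; ring. }
      replace (sumn D (fun j => c j * (F x * e j x))) with (F x * sumn D (fun j => c j * e j x)).
      2:{ rewrite <- sumn_scal. apply sumn_ext; intros; ring. }
      ring. }
  rewrite !rsum_map_plus, hFF in H0.
  rewrite rsum_map_scal, rsum_sumn in H0.
  rewrite rsum_sumn in H0.
  rewrite (sumn_ext D _ (fun j => L * (c j * c j))) in H0.
  2:{ intros j Hj. rewrite rsum_map_scal, hFe; auto. ring. }
  rewrite (sumn_ext D (fun i => rsum (map (fun x => c i * sumn D (fun j0 => c j0 * (e i x * e j0 x))) X)) (fun j => L * (c j * c j))) in H0.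
  2:{ intros i Hi. rewrite rsum_map_scal, rsum_sumn.
      rewrite (sumn_ext D _ (fun j => L * (dl i j * c j))).
      2:{ intros j Hj. rewrite rsum_map_scal, hee; auto. ring. }
      rewrite sumn_scal, sumn_delta_l; auto. ring. }
  rewrite !sumn_scal in H0.
  assert (0 <= L * (harm_ip n Ky Ky - sumn D (fun j => c j * c j))) by lra.
  assert (0 <= harm_ip n Ky Ky - sumn D (fun j => c j * c j)).
  { destruct (Rle_lt_dec 0 (harm_ip n Ky Ky - sumn D (fun j => c j * c j))); auto.
    assert (L * (harm_ip n Ky Ky - sumn D (fun j => c j * c j)) < 0) by (apply Rmult_pos_neg; auto). lra. }
  unfold c in H1. lra.
Qed.

Lemma xi_vneg x i : xi (vneg x) i = - xi x i.
Proof. unfold xi, vneg. rewrite <- (map_nth Ropp x 0 i). rewrite Ropp_0. reflexivity. Qed.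

Lemma mono_vneg a y : length a = length y -> monomial a (vneg y) = (-1) ^ (expo_deg a) * monomial a y.
Proof.
  revert a; induction y as [|y0 ys IH]; intros a Ha; destruct a as [|a0 as_]; simpl in Ha; try discriminate.
  - unfold monomial; simpl; ring.
  - unfold monomial, expo_deg in *. simpl. injection Ha as Ha. specialize (IH as_ Ha). unfold vneg in IH.
    unfold vneg. rewrite IH. replace (- y0) with ((-1) * y0) by ring. rewrite Rpow_mult_distr, pow_add. ring.
Qed.

Lemma mono_zero_list q y : monomial (repeat 0%nat q) y = 1.
Proof.
  revert y; induction q; intros y; destruct y; unfold monomial in *; simpl; auto.
  rewrite IHq. ring.
Qed.

Lemma monoA p q e y : length y = (p + S q)%nat -> monomial (repeat 0%nat p ++ e :: repeat 0%nat q) y = xi y p ^ e.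
Proof.
  revert y; induction p; intros y Hy; destruct y as [|y0 ys]; simpl in Hy; try lia.
  - unfold monomial in *; simpl. fold (monomial (repeat 0%nat q) ys). rewrite mono_zero_list. unfold xi; simpl; ring.
  - unfold monomial in *; simpl. rewrite IHp by lia. unfold xi; simpl; ring.
Qed.

Lemma monoB p q r y : length y = (p + S q + S r)%nat ->
  monomial (repeat 0%nat p ++ 1%nat :: repeat 0%nat q ++ 1%nat :: repeat 0%nat r) y = xi y p * xi y (p + S q).
Proof.
  revert y; induction p; intros y Hy; destruct y as [|y0 ys]; simpl in Hy; try lia.
  - unfold monomial in *; simpl. fold (monomial (repeat 0%nat q ++ 1%nat :: repeat 0%nat r) ys).
    rewrite monoA by lia. unfold xi; simpl; ring.
  - unfold monomial in *; simpl. rewrite IHp by lia. unfold xi; simpl; ring.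
Qed.

Lemma sum0_char a : list_sum a = 0%nat -> a = repeat 0%nat (length a).
Proof. induction a; simpl; intros H; auto. f_equal; [lia|]. apply IHa; lia. Qed.

Lemma sum1_char a : list_sum a = 1%nat -> exists p q, a = repeat 0%nat p ++ 1%nat :: repeat 0%nat q.
Proof.
  induction a as [|h t IH]; simpl; intros H; [lia|].
  destruct h as [|[|h]].
  - destruct (IH H) as [p [q ->]]. exists (S p), q. reflexivity.
  - exists 0%nat, (length t). simpl. f_equal. apply sum0_char. lia.
  - lia.
Qed.

Lemma sum2_char a : list_sum a = 2%nat ->
  (exists p q, a = repeat 0%nat p ++ 2%nat :: repeat 0%nat q) \/
  (exists p q r, a = repeat 0%nat p ++ 1%nat :: repeat 0%nat q ++ 1%nat :: repeat 0%nat r).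
Proof.
  induction a as [|h t IH]; simpl; intros H; [lia|].
  destruct h as [|[|[|h]]].
  - destruct (IH H) as [[p [q ->]]|[p [q [r ->]]]].
    + left. exists (S p), q. reflexivity.
    + right. exists (S p), q, r. reflexivity.
  - right. destruct (sum1_char t) as [q [r ->]]; [lia|]. exists 0%nat, q, r. reflexivity.
  - left. exists 0%nat, (length t). simpl. f_equal. apply sum0_char. lia.
  - lia.
Qed.

Lemma forallb_even_sum a : forallb Nat.even a = true -> Nat.even (list_sum a) = true.
Proof.
  induction a; simpl; auto. intros H. apply andb_prop in H. destruct H as [H1 H2].
  rewrite Nat.even_add, H1, IHa; auto.
Qed.

Lemma forallb_rep q : forallb Nat.even (repeat 0%nat q) = true.
Proof. induction q; simpl; auto. Qed.

Lemma rprod_rep q : rprod (map (fun ai => oddfact (Nat.div2 ai)) (repeat 0%nat q)) = 1.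
Proof. induction q; simpl; auto. rewrite IHq. ring. Qed.

Lemma list_sum_rep q : list_sum (repeat 0%nat q) = 0%nat.
Proof. induction q; simpl; auto. Qed.

Lemma sm_zero m : sphere_moment m (repeat 0%nat m) = 1.
Proof.
  unfold sphere_moment. rewrite forallb_rep, rprod_rep. unfold expo_deg. rewrite list_sum_rep. simpl. field.
Qed.

Lemma sm_A m p q : (0 < m)%nat -> sphere_moment m (repeat 0%nat p ++ 2%nat :: repeat 0%nat q) = 1 / INR m.
Proof.
  intros Hm. unfold sphere_moment. rewrite forallb_app, forallb_rep. simpl (forallb _ (_ :: _)). rewrite forallb_rep. simpl.
  rewrite map_app, rprod_app, rprod_rep. simpl. rewrite rprod_rep. unfold expo_deg.
  rewrite list_sum_app, list_sum_rep. simpl. rewrite list_sum_rep. simpl. rewrite Nat.add_0_r. field.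
  apply not_0_INR; lia.
Qed.

Lemma sm_B m p q r : sphere_moment m (repeat 0%nat p ++ 1%nat :: repeat 0%nat q ++ 1%nat :: repeat 0%nat r) = 0.
Proof. unfold sphere_moment. rewrite forallb_app, forallb_rep. reflexivity. Qed.

Lemma sm_odd m a : Nat.even (expo_deg a) = false -> sphere_moment m a = 0.
Proof.
  intros H. unfold sphere_moment. destruct (forallb Nat.even a) eqn:E; auto.
  apply forallb_even_sum in E. unfold expo_deg in H. congruence.
Qed.

Lemma rsum_map_div {A} (f : A -> R) l c : rsum (map f l) / c = rsum (map (fun x => f x / c) l).
Proof. unfold Rdiv. rewrite Rmult_comm, <- rsum_map_scal. apply rsum_map_ext; intros; ring. Qed.

Lemma design_of_monomials m t Y : Y <> [] -> Forall (on_sphere m) Y ->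
  (forall a, length a = m -> (expo_deg a <= t)%nat ->
     rsum (map (monomial a) Y) / INR (length Y) = sphere_moment m a) ->
  spherical_design m t Y.
Proof.
  intros HY HF Hm. split; [auto|split; [auto|]]. intros p Hp.
  unfold poly_eval, sphere_avg.
  rewrite (rsum_map_swap (fun y t0 => fst t0 * monomial (snd t0) y)).
  rewrite rsum_map_div. apply rsum_map_ext. intros t0 Ht0.
  unfold poly_on in Hp. rewrite Forall_forall in Hp. destruct (Hp t0 Ht0) as [H1 H2].
  rewrite rsum_map_scal. unfold Rdiv. rewrite Rmult_assoc. f_equal. apply Hm; auto.
Qed.

Lemma antipodal_moments m Z : (0 < m)%nat -> Z <> [] -> (forall z, In z Z -> length z = m) ->
  (forall p q, (p < m)%nat -> (q < m)%nat -> rsum (map (fun z => xi z p * xi z q) Z) = INR (length Z) * dl p q / INR m) ->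
  forall a, length a = m -> (expo_deg a <= 3)%nat ->
  rsum (map (monomial a) (Z ++ map vneg Z)) / INR (length (Z ++ map vneg Z)) = sphere_moment m a.
Proof.
  intros Hm HZ HL H2 a Ha Hd.
  assert (HLZ : 0 < INR (length Z)) by (destruct Z; [congruence|]; simpl length; apply lt_0_INR; lia).
  assert (HmR : 0 < INR m) by (apply lt_0_INR; lia).
  rewrite map_app, rsum_app, length_app, length_map, map_map.
  rewrite (rsum_map_ext (fun x => monomial a (vneg x)) (fun x => (-1) ^ expo_deg a * monomial a x)).
  2:{ intros z Hz. apply mono_vneg. rewrite HL; auto. }
  rewrite rsum_map_scal. rewrite plus_INR.
  change (map (fun x => monomial a x) Z) with (map (monomial a) Z).
  unfold point in *.
  assert (expo_deg a = 0 \/ expo_deg a = 1 \/ expo_deg a = 2 \/ expo_deg a = 3)%nat as Hc by lia.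
  destruct Hc as [Hc|[Hc|[Hc|Hc]]].
  - pose proof (sum0_char a Hc) as Ea. rewrite Ha in Ea. rewrite Hc. rewrite Ea.
    rewrite (rsum_map_ext (monomial (repeat 0%nat m)) (fun _ => 1)) by (intros; apply mono_zero_list).
    rewrite rsum_map_const, sm_zero. simpl. unfold point in *. field. lra.
  - rewrite sm_odd by (rewrite Hc; reflexivity). rewrite Hc. simpl. unfold point in *. unfold Rdiv. ring.
  - destruct (sum2_char a Hc) as [[p [q Ea]]|[p [q [r Ea]]]].
    + assert (Hl : length a = (p + S q)%nat) by (rewrite Ea, length_app; simpl; rewrite !repeat_length; lia).
      rewrite (rsum_map_ext (monomial a) (fun z => xi z p * xi z p)).
      2:{ intros z Hz. rewrite Ea, monoA. simpl; ring. rewrite HL, <- Ha, Hl; auto. }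
      rewrite H2 by lia. rewrite Hc, Ea. rewrite sm_A by auto. unfold dl. rewrite Nat.eqb_refl. simpl.
      unfold point in *. field. lra.
    + assert (Hl : length a = (p + S q + S r)%nat) by (rewrite Ea, !length_app; simpl; rewrite ?length_app; simpl; rewrite !repeat_length; lia).
      rewrite (rsum_map_ext (monomial a) (fun z => xi z p * xi z (p + S q))).
      2:{ intros z Hz. rewrite Ea, monoB. ring. rewrite HL, <- Ha, Hl; auto. }
      rewrite H2 by lia. rewrite Ea. rewrite sm_B. unfold dl.
      destruct (Nat.eqb_spec p (p + S q)); [lia|]. unfold point in *. unfold Rdiv; ring.
  - rewrite sm_odd by (rewrite Hc; reflexivity). rewrite Hc. simpl. unfold point in *. unfold Rdiv. ring.
Qed.

Lemma vneg_invol x : vneg (vneg x) = x.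
Proof. unfold vneg. rewrite map_map. rewrite (map_ext _ (fun a => a)) by (intros; ring). apply map_id. Qed.

Lemma half_sum (X X' : list point) (h : point -> R) :
  NoDup X -> (forall x, In x X -> In (vneg x) X) -> NoDup X' -> incl X' X ->
  (2 * length X' = length X)%nat -> (forall x y, In x X' -> In y X' -> y <> vneg x) ->
  (forall x, h (vneg x) = h x) ->
  rsum (map h X) = 2 * rsum (map h X').
Proof.
  intros HND Hcl HND' Hinc Hlen Hanti Hh.
  assert (Hp : Permutation (X' ++ map vneg X') X).
  { apply NoDup_Permutation_bis.
    - apply NoDup_app; auto.
      + apply FinFun.Injective_map_NoDup; auto. intros a b Hab.
        rewrite <- (vneg_invol a), Hab, vneg_invol. reflexivity.
      + intros a Ha Hb. apply in_map_iff in Hb. destruct Hb as [y [<- Hy]].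
        apply (Hanti y (vneg y)); auto.
    - rewrite length_app, length_map. lia.
    - intros a Ha. apply in_app_or in Ha. destruct Ha as [Ha|Ha]; auto.
      apply in_map_iff in Ha. destruct Ha as [y [<- Hy]]. auto. }
  rewrite <- (rsum_perm _ _ (Permutation_map h Hp)).
  rewrite map_app, rsum_app, map_map.
  rewrite (rsum_map_ext (fun x => h (vneg x)) h) by auto. ring.
Qed.

Lemma nth_map_seq (f : nat -> R) m j : (j < m)%nat -> nth j (map f (seq 0 m)) 0 = f j.
Proof.
  intros Hj. rewrite (nth_indep _ 0 (f 0%nat)) by (rewrite length_map, length_seq; auto).
  rewrite map_nth, seq_nth; auto.
Qed.

Lemma qf_mscale n c A x : qf n (mscale c A) x = c * qf n A x.
Proof.
  unfold qf, mscale. rewrite <- sumn_scal. apply sumn_ext; intros i Hi.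
  rewrite <- sumn_scal. apply sumn_ext; intros j Hj. ring.
Qed.

Lemma qf_vneg n A x : qf n A (vneg x) = qf n A x.
Proof.
  unfold qf. apply sumn_ext; intros i Hi. apply sumn_ext; intros j Hj. rewrite !xi_vneg. ring.
Qed.

Lemma INR_D d : INR (d * (d + 3) / 2) = INR d * (INR d + 3) / 2.
Proof.
  assert (exists k, d * (d + 3) = 2 * k)%nat as [k Hk].
  { induction d. - exists 0%nat; reflexivity. - destruct IHd as [k Hk]. exists (k + d + 2)%nat. nia. }
  rewrite Hk. rewrite Nat.mul_comm, Nat.div_mul by lia.
  apply (f_equal INR) in Hk. rewrite !mult_INR, plus_INR in Hk. simpl in Hk. lra.
Qed.

Theorem corollary1p3 (d : nat) (X X' : list point) (K : point -> mat) (E : nat -> mat) :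
  (1 <= d)%nat ->
  NoDup X ->
  spherical_design (S d) 4 X ->
  (forall x, In x X -> In (vneg x) X) ->
  NoDup X' ->
  incl X' X ->
  (2 * length X' = length X)%nat ->
  (forall x y, In x X' -> In y X' -> y <> vneg x) ->
  (forall x, on_sphere (S d) x -> is_reproducing (S d) x (K x)) ->
  orthonormal_basis (S d) (d * (d + 3) / 2) E ->
  spherical_design (d * (d + 3) / 2) 3
    (map (fun x => coords (S d) (d * (d + 3) / 2) E (G_of (S d) (K x))) X' ++
     map (fun x => vneg (coords (S d) (d * (d + 3) / 2) E (G_of (S d) (K x)))) X').
Proof.
  intros Hd HND HX Hcl HND' Hinc Hlen Hanti HK HE.
  set (n := S d) in *. set (Dn := (d * (d + 3) / 2)%nat) in *.
  assert (Hn : (0 < n)%nat) by (unfold n; lia).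
  assert (HDr : INR Dn = (INR n + 2) * (INR n - 1) / 2).
  { unfold Dn, n. rewrite INR_D, S_INR. field. }
  assert (HDpos : 0 < INR Dn).
  { unfold Dn. rewrite INR_D. apply le_INR in Hd. simpl in Hd. nra. }
  assert (HDn : (0 < Dn)%nat) by (apply INR_lt; simpl; lra).
  assert (HL : 0 < INR (length X)) by (apply (design_len _ _ _ HX)).
  assert (Hsym : forall A B, harm_ip n A B = harm_ip n B A).
  { intros A B. rewrite !(harm_ip_avg n X) by auto. f_equal. apply rsum_map_ext; intros; ring. }
  destruct HE as [HE1 HE2].
  assert (HKr : forall x, on_sphere n x -> forall Q, is_harm2 n Q -> harm_ip n (K x) Q = qf n Q x).
  { intros x Hx Q HQ. destruct (HK x Hx) as [_ HKQ]. rewrite HKQ by auto. apply poly_eval_quad. apply Hx. }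
  assert (HN : forall x, on_sphere n x -> harm_ip n (K x) (K x) = INR Dn).
  { intros x Hx. destruct (HK x Hx) as [HKh _].
    rewrite HKr by auto. rewrite <- (Cand_repr n x (K x)) by auto.
    rewrite Hsym, HKr by (auto; apply Cand_harm2; auto). rewrite Cand_val by auto. auto. }
  assert (Hle : forall x, on_sphere n x -> sumn Dn (fun j => qf n (E j) x * qf n (E j) x) <= INR Dn).
  { intros x Hx. rewrite <- (HN x Hx). apply (bessel n X Dn E); auto. split; auto. }
  assert (Heq : forall x, In x X -> sumn Dn (fun j => qf n (E j) x * qf n (E j) x) = INR Dn).
  { assert (Hsum : rsum (map (fun x => INR Dn + (-1) * sumn Dn (fun j => qf n (E j) x * qf n (E j) x)) X) = 0).
    { rewrite rsum_map_plus, rsum_map_scal, rsum_map_const, rsum_sumn.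
      rewrite (sumn_ext Dn _ (fun _ => INR (length X))).
      2:{ intros j Hj. rewrite harm_ip_sumX, HE2 by auto. rewrite Nat.eqb_refl. ring. }
      rewrite sumn_const. ring. }
    intros x Hx.
    assert (Z := rsum_map_zero_each (fun x => INR Dn + (-1) * sumn Dn (fun j => qf n (E j) x * qf n (E j) x)) X).
    assert (Hnn : forall y, In y X -> 0 <= INR Dn + (-1) * sumn Dn (fun j => qf n (E j) y * qf n (E j) y)).
    { intros y Hy. pose proof (Hle y (design_in _ _ _ _ HX Hy)). lra. }
    specialize (Z Hnn Hsum x Hx). simpl in Z. lra. }
  assert (Hee' : forall p q, (p < Dn)%nat -> (q < Dn)%nat ->
     rsum (map (fun x => qf n (E p) x * qf n (E q) x) X') = INR (length X') * dl p q).
  { intros p q Hp Hq.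
    assert (rsum (map (fun x => qf n (E p) x * qf n (E q) x) X) = 2 * rsum (map (fun x => qf n (E p) x * qf n (E q) x) X')).
    { apply half_sum; auto. intros x. rewrite !qf_vneg. reflexivity. }
    rewrite harm_ip_sumX, HE2, <- Hlen in H by auto. rewrite mult_INR in H. simpl in H. unfold dl. lra. }
  set (g := fun x => coords n Dn E (G_of n (K x))).
  set (w := / sqrt (INR Dn)).
  assert (Hw2 : w * w = / INR Dn).
  { unfold w. rewrite <- Rinv_mult, sqrt_sqrt; auto; lra. }
  assert (Hglen : forall x, length (g x) = Dn).
  { intros x. unfold g, coords. rewrite length_map, length_seq. reflexivity. }
  assert (Hgxi : forall x, on_sphere n x -> forall j, (j < Dn)%nat -> xi (g x) j = w * qf n (E j) x).
  { intros x Hx j Hj. unfold g, coords, xi. rewrite nth_map_seq by auto.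
    unfold G_of. rewrite (harm_ip_avg n X (mscale _ (K x)) (E j)) by auto.
    rewrite (rsum_map_ext _ (fun y => / sqrt (harm_ip n (K x) (K x)) * (qf n (K x) y * qf n (E j) y)))
      by (intros; rewrite qf_mscale; ring).
    rewrite rsum_map_scal. unfold Rdiv. rewrite Rmult_assoc. fold (rsum (map (fun y => qf n (K x) y * qf n (E j) y) X) / INR (length X)).
    rewrite <- (harm_ip_avg n X (K x) (E j) HX). rewrite (HKr x Hx (E j) (HE1 j Hj)), (HN x Hx). reflexivity. }
  replace (map (fun x => vneg (coords n Dn E (G_of n (K x)))) X') with (map vneg (map g X'))
    by (rewrite map_map; reflexivity).
  fold g. 
  assert (HX'ne : X' <> []).
  { intros ->. simpl in Hlen. rewrite <- Hlen in HL. simpl in HL. lra. }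
  assert (HX'sph : forall x, In x X' -> on_sphere n x) by (intros x Hx; apply (design_in _ _ _ _ HX); auto).
  apply design_of_monomials.
  - destruct X'; [congruence|]. simpl. discriminate.
  - apply Forall_forall. intros y Hy. apply in_app_or in Hy.
    assert (Hgs : forall x, In x X' -> on_sphere Dn (g x)).
    { intros x Hx. split; auto. rewrite dot_self, Hglen.
      rewrite (sumn_ext Dn _ (fun j => (w * w) * (qf n (E j) x * qf n (E j) x))).
      2:{ intros j Hj. rewrite Hgxi by auto. ring. }
      rewrite sumn_scal, Heq, Hw2 by auto. field. lra. }
    destruct Hy as [Hy|Hy]; apply in_map_iff in Hy.
    + destruct Hy as [x [<- Hx]]. auto.
    + destruct Hy as [z [<- Hz]]. apply in_map_iff in Hz. destruct Hz as [x [<- Hx]].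
      destruct (Hgs x Hx) as [Hl1 Hl2]. split.
      * unfold vneg. rewrite length_map. auto.
      * rewrite dot_self in Hl2 |- *. unfold vneg at 1. rewrite length_map. rewrite <- Hl2.
        apply sumn_ext; intros k Hk. rewrite xi_vneg. ring.
  - apply antipodal_moments; auto.
    + destruct X'; [congruence|]. simpl. discriminate.
    + intros z Hz. apply in_map_iff in Hz. destruct Hz as [x [<- _]]. auto.
    + intros p q Hp Hq. rewrite map_map, length_map.
      rewrite (rsum_map_ext _ (fun x => (w * w) * (qf n (E p) x * qf n (E q) x))).
      2:{ intros x Hx. rewrite !Hgxi by auto. ring. }
      rewrite rsum_map_scal, Hee', Hw2 by auto. field. lra.
Qed.
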